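(* If a Tychonoff space $X$ contains an infinite discrete clopen subset, then $X$ does not have CSHP.
   Context: For a Tychonoff space $Y$, $\operatorname{Homeo}_{cpt}(Y)$ is the group of homeomorphisms of $Y$ with compact support $\operatorname{cl}_Y\{y\mid h(y)\neq y\}$; each extends to a homeomorphism of $\beta Y$ that is the identity on $\beta Y\setminus Y$, and $\operatorname{Homeo}_{cpt}(Y)$ is given the compact-open topology induced from $\beta Y$. For compact $K\subseteq Y$, $\operatorname{Homeo}_K(Y)$ is the subgroup of homeomorphisms fixing every point outside $K$. $Y$ has CSHP if the colimit space topology on $\bigcup_{K\in\mathscr K(Y)}\operatorname{Homeo}_K(Y)=\operatorname{Homeo}_{cpt}(Y)$, namely $\{U\mid U\cap\operatorname{Homeo}_K(Y)\text{ open in }\operatorname{Homeo}_K(Y)\ \forall K\}$ ($\mathscr K(Y)$ the compact subsets of $Y$), coincides with the topology of $\operatorname{Homeo}_{cpt}(Y)$. *)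

(* Defs.v *)
From HB Require Import structures.
From mathcomp Require Import all_boot all_order all_algebra.
From mathcomp Require Import all_classical all_reals all_analysis.
From mathcomp Require Import Rstruct Rstruct_topology.

Set Implicit Arguments.
Unset Strict Implicit.
Unset Printing Implicit Defensive.

Local Open Scope classical_set_scope.

Definition Tychonoff (X : topologicalType) : Prop :=
  completely_regular_space X /\ hausdorff_space X.

Definition is_homeo (X : topologicalType) (h : X -> X) : Prop :=
  exists g : X -> X, [/\ cancel h g, cancel g h, continuous h & continuous g].

Definition HomeoCpt (X : topologicalType) : set (X -> X) :=
  [set h | is_homeo h /\ compact (closure [set x | h x <> x])].

Definition HomeoK (X : topologicalType) (K : set X) : set (X -> X) :=
  [set h | @HomeoCpt X h /\ forall x, ~ K x -> h x = x].

Definition is_stone_cech (X B : topologicalType) (e : X -> B) : Prop :=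
  [/\ compact [set: B] /\ hausdorff_space B,
      continuous e /\ injective e,
      (forall U : set X, open U ->
         exists V : set B, open V /\ e @` U = V `&` range e),
      closure (range e) = [set: B] &
      forall (K : topologicalType) (f : X -> K),
        compact [set: K] -> hausdorff_space K -> continuous f ->
        exists g : B -> K, continuous g /\ forall x, g (e x) = f x].

Definition ext (X B : topologicalType) (e : X -> B) (h : X -> X) : B -> B :=
  fun b => match pselect (exists x, e x = b) with
           | left P => e (h (projT1 (cid P)))
           | right _ => b
           end.

(* Open sets of Homeo_cpt(X) in the compact-open topology induced from B
   (via h |-> ext e h into the compact-open topology on B -> B). *)
Definition cpt_open (X B : topologicalType) (e : X -> B) (U : set (X -> X)) :
  Prop :=
  exists W : set {compact-open, B -> B},
    open W /\ U = @HomeoCpt X `&` (fun h => ext e h) @^-1` W.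

(* Open sets of the colimit topology: U meets every Homeo_K(X), K compact,
   in a relatively open set of Homeo_K(X) (with its subspace topology). *)
Definition colim_open (X B : topologicalType) (e : X -> B) (U : set (X -> X)) :
  Prop :=
  forall K : set X, compact K ->
    exists U' : set (X -> X), cpt_open e U' /\ U `&` HomeoK K = U' `&` HomeoK K.

Definition CSHP (X B : topologicalType) (e : X -> B) : Prop :=
  forall U : set (X -> X), U `<=` @HomeoCpt X ->
    (cpt_open e U <-> colim_open e U).

Definition infinite_discrete_clopen (X : topologicalType) (D : set X) : Prop :=
  [/\ infinite_set D,
      (forall d, D d -> exists U : set X, open U /\ U `&` D = [set d]),
      open D & closed D].

(* Main.v *)
Require Import Defs.
From mathcomp Require Import all_boot all_order all_algebra.
From mathcomp Require Import all_classical all_reals all_analysis.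
From mathcomp Require Import finmap.
Local Open Scope classical_set_scope.
Set Implicit Arguments.
Unset Strict Implicit.
Unset Printing Implicit Defensive.

Definition swap (X : eqType) (a b : X) (x : X) : X :=
  if x == a then b else if x == b then a else x.

Lemma swapK (X : eqType) (a b : X) : cancel (swap a b) (swap a b).
Proof.
move=> x; rewrite /swap.
case: (eqVneq x a) => [->|xa].
  by rewrite eqxx; case: ifP => [/eqP->|]; rewrite ?eqxx.
case: (eqVneq x b) => [->|xb]; first by rewrite eqxx.
by rewrite (negbTE xa) (negbTE xb).
Qed.

Lemma swap_l (X : eqType) (a b : X) : swap a b a = b.
Proof. by rewrite /swap eqxx. Qed.

Lemma swap_out (X : eqType) (a b x : X) : x <> a -> x <> b -> swap a b x = x.
Proof. by rewrite /swap => /eqP/negbTE -> /eqP/negbTE ->. Qed.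

Lemma swap_cont (X : topologicalType) (a b : X) :
  open [set a] -> open [set b] -> closed [set a] -> closed [set b] ->
  continuous (swap a b).
Proof.
move=> oa ob ca cb; apply/continuousP => A oA; rewrite openE => x Ax.
rewrite /interior.
case: (eqVneq x a) => [xa|xa].
  have Na : nbhs a [set a] by apply: open_nbhs_nbhs; split.
  by rewrite xa in Ax *; apply: filterS Na => y /= ->.
case: (eqVneq x b) => [xb|xb].
  have Nb : nbhs b [set b] by apply: open_nbhs_nbhs; split.
  by rewrite xb in Ax *; apply: filterS Nb => y /= ->.
have oN : open (A `&` ~` [set a] `&` ~` [set b]).
  by apply: openI; [apply: openI => //; apply: closed_openC|apply: closed_openC].
have Ax' : A x by move: Ax => /=; rewrite swap_out //; apply/eqP.
have Nx : nbhs x (A `&` ~` [set a] `&` ~` [set b]).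
  apply: open_nbhs_nbhs; split => //.
  by split; [split=> // /eqP; rewrite (negbTE xa)| move=> /eqP; rewrite (negbTE xb)].
apply: filterS Nx => y [[Ay ya] yb] /=; rewrite swap_out //.
Qed.

Lemma swap_set (X : eqType) (a b : X) : a <> b ->
  [set x | swap a b x <> x] = [set a] `|` [set b].
Proof.
move=> ab; apply/seteqP; split => x /=.
  move=> h; case: (pselect (x = a)) => [->|xa]; first by left.
  case: (pselect (x = b)) => [->|xb]; first by right.
  by exfalso; apply: h; rewrite swap_out.
case=> ->; first by rewrite swap_l => /esym; exact: ab.
rewrite /swap eqxx; case: ifP => [/eqP ba|_] //.
by move=> _; apply: ab.
Qed.

Lemma swap_homeo (X : topologicalType) (a b : X) : a <> b ->
  open [set a] -> open [set b] -> closed [set a] -> closed [set b] ->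
  HomeoCpt (swap a b).
Proof.
move=> ab oa ob ca cb; split.
  have hc := swap_cont oa ob ca cb.
  by exists (swap a b); split => //; apply: swapK.
rewrite swap_set // -(proj1 (closure_id _)); last exact: closedU.
by apply: compactU; apply: compact_set1.
Qed.

Section ExtLemmas.
Variables (X B : topologicalType) (e : X -> B).
Hypothesis inj_e : injective e.

Lemma ext_e h x : ext e h (e x) = e (h x).
Proof.
rewrite /ext; case: pselect => [P|nP]; last by exfalso; apply: nP; exists x.
by case: (cid P) => x' /= /inj_e ->.
Qed.

Lemma ext_id : ext e id = id.
Proof.
apply: funext => y; rewrite /ext; case: pselect => [P|//].
by case: (cid P).
Qed.

Lemma ext_swap (a b : X) y : y <> e a -> y <> e b -> ext e (swap a b) y = y.
Proof.
move=> ya yb; rewrite /ext; case: pselect => [P|//].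
case: (cid P) => x /= ex; rewrite swap_out //.
  by move=> xa; apply: ya; rewrite -ex xa.
by move=> xb; apply: yb; rewrite -ex xb.
Qed.
End ExtLemmas.

Lemma pigeon (T U : Type) (P : seq (set U)) (f : T -> U) (D : set T) :
  infinite_set D -> exists D', [/\ D' `<=` D, infinite_set D' &
    forall p, List.In p P -> forall x y, D' x -> D' y -> p (f x) -> p (f y)].
Proof.
elim: P D => [|p P IH] D iD.
  by exists D; split.
have [D1 [D1D iD1 hD1]] := IH D iD.
case: (pselect (finite_set (D1 `&` (f @^-1` p)))) => [fin|inf].
  exists (D1 `\` (f @^-1` p)); split.
  - by move=> x [/D1D].
  - move=> fD; apply: iD1.
    apply: (sub_finite_set (B := (D1 `&` (f @^-1` p)) `|` (D1 `\` (f @^-1` p)))).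
      move=> x D1x; case: (pselect (p (f x))) => px; [left|right]; by split.
    by rewrite finite_setU; split.
  move=> q /= [<-|qP] x y [D1x npx] [D1y npy]; first by move=> /npx.
  exact: hD1.
exists (D1 `&` (f @^-1` p)); split.
- by move=> x [/D1D].
- exact: inf.
move=> q /= [<-|qP] x y [D1x px] [D1y py]; first by [].
exact: hD1.
Qed.

Lemma two_points T (D : set T) : infinite_set D ->
  exists a b, [/\ D a, D b & a <> b].
Proof.
move=> iD; have [a Da] := infinite_setN0 iD.
have iD' : infinite_set (D `\` [set a]) by apply: infinite_setD => //; exact: finite_set1.
have [b [Db ba]] := infinite_setN0 iD'.
by exists a, b; split => // ab; apply: ba; rewrite ab.
Qed.

Lemma cpt_discrete_finite (X : topologicalType) (D K : set X) :
  closed D -> (forall d, D d -> exists U : set X, open U /\ U `&` D = [set d]) ->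
  compact K -> finite_set (K `&` D).
Proof.
move=> cD hD cK; apply: contrapT => iKD.
pose F := [set S : set X | finite_set ((K `&` D) `\` S)].
have PF : ProperFilter F.
  split.
  - by rewrite /F /= setD0.
  - split.
    + by rewrite /F /= setDT.
    + by move=> A B; rewrite /F /= setDIr finite_setU.
    + move=> A B AB; apply: sub_finite_set => x [KDx nBx]; split => // Ax.
      by apply: nBx; apply: AB.
have FK : F K.
  by rewrite /F /=; apply: (sub_finite_set (B := set0)) => // x [[Kx _] nK].
have [p [Kp clp]] := cK F PF FK.
case: (pselect (D p)) => Dp.
  have [U [oU UD]] := hD p Dp.
  have : ((K `&` D) `\` [set p]) `&` U !=set0.
    apply: clp.
      rewrite /F /=; apply: (sub_finite_set (B := [set p])); last exact: finite_set1.
      move=> x [KDx h]; apply: contrapT => xp; exact: h.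
    apply: open_nbhs_nbhs; split => //.
    by have : [set p] p by []; rewrite -UD => -[].
  case=> x [[[Kx Dx] xp] Ux].
  by have : (U `&` D) x by []; rewrite UD.
have : (K `&` D) `&` (~` D) !=set0.
  apply: clp.
    by rewrite /F /=; apply: (sub_finite_set (B := set0)) => // x [].
  by apply: open_nbhs_nbhs; split => //; apply: closed_openC.
by case=> x [[_ Dx] nDx].
Qed.

Lemma swap_r (X : eqType) (a b : X) : a <> b -> swap a b b = a.
Proof.
move=> ab; rewrite /swap eqxx; case: ifP => [/eqP ba|//].
by exfalso; apply: ab.
Qed.

Lemma filter_seq (T : Type) (I : eqType) (F : set_system T) (s : seq I)
  (P : I -> set T) : Filter F -> (forall i, i \in s -> F (P i)) ->
  F [set x | forall i, i \in s -> P i x].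
Proof.
move=> FF; elim: s => [|i s IH] h.
  by apply: filterS filterT => x _ i; rewrite in_nil.
have Fi : F (P i) by apply: h; rewrite in_cons eqxx.
have Fs : F [set x | forall j, j \in s -> P j x].
  by apply: IH => j js; apply: h; rewrite in_cons js orbT.
apply: filterS (filterI Fi Fs) => x [Pix Psx] j; rewrite in_cons.
by case/orP => [/eqP ->|/Psx].
Qed.

Unset Implicit Arguments.
Set Strict Implicit.

Theorem corollary5p6 (X B : topologicalType) (e : X -> B) :
  Tychonoff X -> is_stone_cech e ->
  (exists D : set X, infinite_discrete_clopen D) ->
  ~ CSHP e.
Proof.
move=> [_ hX] [[cB hB] [ce inje] emb dense univ] [D [iD hD oD cD]] cshp.
have cX1 : forall x : X, closed [set x].
  by apply: accessible_closed_set1; apply: hausdorff_accessible.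
have cB1 : forall x : B, closed [set x].
  by apply: accessible_closed_set1; apply: hausdorff_accessible.
have oD1 : forall d, D d -> open [set d].
  by move=> d /hD [V [oV <-]]; apply: openI.
pose U := [set h : X -> X | HomeoCpt h /\
  forall a b, D a -> D b -> a <> b -> h a <> b].
have sU : U `<=` @HomeoCpt X by move=> h [].
have col : colim_open e U.
  move=> K cK.
  have := cpt_discrete_finite cD hD cK; move=> /finite_fsetP [S KDS].
  have SD : forall x, x \in S -> K x /\ D x.
    by move=> x xS; have : [set` S] x by []; rewrite -KDS.
  have DS : forall x, K x -> D x -> x \in S.
    by move=> x Kx Dx; have : (K `&` D) x by []; rewrite KDS.
  pose W := [set g : {compact-open, B -> B} | forall a c, a \in S -> c \in S ->
    a <> c -> g (e a) <> e c].
  exists (@HomeoCpt X `&` (fun h => ext e h) @^-1` W); split.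
    exists W; split => //.
    rewrite openE => g Wg.
    pose s := [seq (a, c) | a <- enum_fset S, c <- enum_fset S].
    pose P (i : X * X) := [set g' : {compact-open, B -> B} |
      i.1 \in S -> i.2 \in S -> i.1 <> i.2 -> g' (e i.1) <> e i.2].
    have : nbhs g [set x | forall i, i \in s -> P i x].
      apply: filter_seq => -[a c] _.
      case: (pselect (a \in S /\ c \in S /\ a <> c)) => [[aS [cS ac]]|nac].
        have oO : open ([set g' | g' @` [set e a] `<=` ~` [set e c]] : set {compact-open, B -> B}).
          apply: compact_open_open; first exact: compact_set1.
          exact: closed_openC.
        have : nbhs g [set g' | g' @` [set e a] `<=` ~` [set e c]].
          apply: open_nbhs_nbhs; split => //.
          by move=> _ [y -> <-]; apply: Wg.
        by apply: filterS => g' hg' _ _ _; apply: hg'; exists (e a).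
      apply: filterS filterT => g' _ aS cS ac; exfalso; apply: nac; by split.
    apply: filterS => g' hg' a c aS cS ac.
    apply: (hg' (a, c)) => //.
    by apply: allpairs_f.
  apply/seteqP; split => h [Uh Kh]; split => //.
    split; first exact: Uh.1.
    move=> a c aS cS ac /=; rewrite ext_e // => /inje.
    have [_ Da] := SD a aS; have [_ Dc] := SD c cS.
    exact: Uh.2 a c Da Dc ac.
  split; first exact: Uh.1.
  move=> a b Da Db ab hab.
  have [[g [hg gh _ _]] _] := Kh.1.
  have Ka : K a.
    apply: contrapT => nKa; apply: ab; rewrite -hab; exact/esym/Kh.2.
  have Kb : K b.
    apply: contrapT => nKb; apply: ab; apply: (can_inj hg).
    by rewrite hab; exact/esym/Kh.2.
  have := Uh.2 a b (DS a Ka Da) (DS b Kb Db) ab.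
  by rewrite /= ext_e // hab.
have ncpt : ~ cpt_open e U.
  move=> [W [oW UE]].
  have Uid : U id.
    split; last by move=> a b _ _ ab.
    split; first by exists id; split => //; by move=> x; exact: cvg_id.
    have -> : [set x : X | id x <> x] = set0.
      by apply/seteqP; split => x //=.
    by rewrite closure0; exact: compact0.
  have Wid : W (id : {compact-open, B -> B}).
    have : (@HomeoCpt X `&` (fun h => ext e h) @^-1` W) id by rewrite -UE.
    by case=> _ /=; rewrite ext_id.
  have Nid : nbhs (id : {compact-open, B -> B}) W by apply: open_nbhs_nbhs.
  pose DI (l : seq (set B * set B)) :=
    forall p, List.In p l -> [/\ compact p.1, open p.2 & p.1 `<=` p.2].
  pose Bs (l : seq (set B * set B)) := [set g : {compact-open, B -> B} |
    (exists a b, [/\ D a, D b, a <> b & g = ext e (swap a b)]) /\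
    forall p, List.In p l -> g @` p.1 `<=` p.2].
  pose G := filter_from DI Bs.
  have FG : Filter G.
    apply: filter_from_filter; first by exists [::].
    move=> l1 l2 h1 h2; exists (l1 ++ l2).
      by move=> p /List.in_app_iff [/h1|/h2].
    move=> g [hg1 hg2]; split; split => // p hp; apply: hg2;
      apply/List.in_app_iff; by [left|right].
  have Gcvg : G --> (id : {compact-open, B -> B}).
    apply/compact_open_cvgP => K O cK oO KO.
    exists [:: (K, O)].
      move=> p [<-|//]; split => // x Kx; apply: KO; by exists x.
    by move=> g [_ hg]; exact: (hg (K, O) (or_introl erefl)).
  have [l DIl BlW] := Gcvg W Nid.
  have [D' [D'D iD' hD']] := pigeon [seq p.1 | p <- l] e iD.
  have [a [b [D'a D'b ab]]] := two_points iD'.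
  have Da := D'D a D'a; have Db := D'D b D'b.
  have hom := swap_homeo ab (oD1 a Da) (oD1 b Db) (cX1 a) (cX1 b).
  have : Bs l (ext e (swap a b)).
    split; first by exists a, b; split.
    move=> p pl _ [y p1y <-].
    have [_ _ p12] := DIl p pl.
    have inl : List.In p.1 [seq p.1 | p <- l] by apply: List.in_map.
    case: (pselect (y = e a)) => [ya|ya].
      rewrite ya ext_e // swap_l; apply: p12.
      by apply: (hD' _ inl a b) => //; rewrite -ya.
    case: (pselect (y = e b)) => [yb|yb].
      rewrite yb ext_e // swap_r //; apply: p12.
      by apply: (hD' _ inl b a) => //; rewrite -yb.
    by rewrite ext_swap //; apply: p12.
  move=> /BlW Wt.
  have : (@HomeoCpt X `&` (fun h => ext e h) @^-1` W) (swap a b) by split.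
  rewrite -UE => -[_ /(_ a b Da Db ab)].
  by rewrite swap_l.
by apply: ncpt; apply/(cshp U sU).
Qed.
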